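(* Let $\mathcal G$ be a shortest-path game in which $\mathrm{Val}^{\mathrm d}(v)\neq+\infty$ and $\overline{\mathrm{Val}}^{\mathrm m}(v)\neq+\infty$ for all vertices $v$, and let $\rho$ be a memoryless strategy of Min such that $\mathbb P^{\rho,\tau}_v(\Diamond T)=1$ for every vertex $v$ and every memoryless strategy $\tau$ of Max. Let $\widetilde{\mathcal G}$ and $\sigma_1$ be as defined below. Then $\sigma_1$ is an NC-strategy: every cycle of $\widetilde{\mathcal G}$ conforming to $\sigma_1$ has negative total weight.
   Context: A shortest-path game is $\mathcal G=(V_{\mathrm{Max}},V_{\mathrm{Min}},T,E,w)$ with finite $V=V_{\mathrm{Max}}\uplus V_{\mathrm{Min}}\uplus T$, edges $E\subseteq (V\setminus T)\times V$ with every non-target vertex having a successor, and integer weights $w\colon E\to\mathbb Z$. Plays from $v$ are finite paths ending at their first visit to $T$ (total payoff $\mathrm{TP}$ = sum of weights) or infinite paths avoiding $T$ ($\mathrm{TP}=+\infty$). Strategies of Min (resp. Max) map finite paths ending in $V_{\mathrm{Min}}$ (resp. $V_{\mathrm{Max}}$) to distributions on successors of the last vertex; deterministic = always Dirac, memoryless = depends only on the last vertex. $\mathrm{Val}^{\mathrm d}(v)=\inf_\sigma\sup_\tau\mathrm{TP}(\text{unique play from } v \text{ conforming to }\sigma,\tau)$ over deterministic strategies. For memoryless $\rho,\tau$, $\mathbb P^{\rho,\tau}_v,\mathbb E^{\rho,\tau}_v$ refer to the induced Markov chain; $\mathrm{Val}^{\mathrm m,\rho}(v)=\sup_\tau\mathbb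 E^{\rho,\tau}_v(\mathrm{TP})$ over memoryless $\tau$, $\overline{\mathrm{Val}}^{\mathrm m}(v)=\inf_\rho\mathrm{Val}^{\mathrm m,\rho}(v)$. For $v\in V_{\mathrm{Min}}$ let $\widetilde E(v)=\arg\min_{v'\in\mathrm{supp}(\rho(v))}\big[w(v,v')+\mathrm{Val}^{\mathrm m,\rho}(v')\big]$, and let $\widetilde{\mathcal G}$ be obtained from $\mathcal G$ by removing every edge $(v,v')$ with $v\in V_{\mathrm{Min}}$, $v'\notin\widetilde E(v)$. Let $d(v)$ be the attractor distance to $T$ in the graph where Min vertices $v$ only use edges to $\mathrm{supp}(\rho(v))$: $d(v)=0$ for $v\in T$, and $d$ is the least function with $d(v)=1+\min_{v'\in\mathrm{supp}(\rho(v))}d(v')$ for $v\in V_{\mathrm{Min}}$ and $d(v)=1+\max_{v'\in E(v)}d(v')$ for $v\in V_{\mathrm{Max}}$. Let $\sigma_1$ be the memoryless deterministic Min strategy with $\sigma_1(v)\in\arg\min_{v'\in\widetilde E(v)}d(v')$. A cycle conforms to $\sigma_1$ if every Min vertex $u$ on it is followed by $\sigma_1(u)$. *)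

(* Defs.v *)
From HB Require Import structures.
From mathcomp Require Import all_boot all_order all_algebra.
From mathcomp Require Import boolp classical_sets reals constructive_ereal ereal esum.
Set Implicit Arguments. Unset Strict Implicit. Unset Printing Implicit Defensive.
Import Order.TTheory GRing.Theory Num.Theory.
Local Open Scope classical_set_scope.
Local Open Scope ring_scope.

(* A shortest-path game on a finite vertex type V.  The partition
   V = V_Max ⊎ V_Min ⊎ T is encoded by the two predicates [isT] and [isMin]
   (disjoint), V_Max being the remaining vertices. *)
Record game (V : finType) := Game {
  isT : pred V;
  isMin : pred V;
  edge : rel V;
  weight : V -> V -> int;
  T_notMin : forall v, isT v -> ~~ isMin v;
  edge_src : forall u v, edge u v -> ~~ isT u;
  succ_ex : forall u, ~~ isT u -> exists v, edge u v
}.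

Definition isMax (V : finType) (G : game V) (v : V) : bool :=
  ~~ isT G v && ~~ isMin G v.

(* A deterministic strategy maps a finite path, given as its first vertex
   v0 and the rest s (so its last vertex is [last v0 s]), to a successor. *)
Definition dstrat (V : finType) (G : game V) (own : pred V)
  (sg : V -> seq V -> V) : Prop :=
  forall v0 s, own (last v0 s) -> edge G (last v0 s) (sg v0 s).

(* the vertices v1 ... vn visited after v0 in the first n steps *)
Fixpoint dhist (V : finType) (G : game V) (sg tau : V -> seq V -> V)
  (v0 : V) (n : nat) : seq V :=
  match n with
  | 0 => [::]
  | n'.+1 =>
      let h := dhist G sg tau v0 n' in
      let c := last v0 h in
      rcons h (if isMin G c then sg v0 h else if isMax G c then tau v0 h else c)
  end.

Definition dplay (V : finType) (G : game V) (sg tau : V -> seq V -> V)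
  (v0 : V) (n : nat) : V := last v0 (dhist G sg tau v0 n).

Definition TPdet (R : realType) (V : finType) (G : game V)
  (sg tau : V -> seq V -> V) (v0 : V) : \bar R :=
  match pselect (exists n, isT G (dplay G sg tau v0 n)) with
  | left H =>
      ((\sum_(i < ex_minn H)
          weight G (dplay G sg tau v0 i) (dplay G sg tau v0 i.+1))%:~R)%:E
  | right _ => +oo%E
  end.

Definition Val_d (R : realType) (V : finType) (G : game V) (v : V) : \bar R :=
  ereal_inf [set ereal_sup [set TPdet R G sg tau v | tau in
                                  [set tau | dstrat G (isMax G) tau]]
            | sg in [set sg | dstrat G (isMin G) sg]].

Definition mstrat (R : realType) (V : finType) (G : game V) (own : pred V)
  (s : V -> V -> R) : Prop :=
  forall u, own u ->
    [/\ forall v, 0 <= s u v,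
        forall v, s u v != 0 -> edge G u v
      & \sum_(v : V) s u v = 1].

Definition trans (R : realType) (V : finType) (G : game V)
  (rho tau : V -> V -> R) (u v : V) : R :=
  if isMin G u then rho u v else if isMax G u then tau u v else 0.

Fixpoint pprob (R : realType) (V : finType) (G : game V)
  (rho tau : V -> V -> R) (x : V) (s : seq V) : R :=
  match s with
  | [::] => 1
  | y :: s' => trans G rho tau x y * pprob G rho tau y s'
  end.

Fixpoint pweight (V : finType) (G : game V) (x : V) (s : seq V) : int :=
  match s with
  | [::] => 0
  | y :: s' => (weight G x y + pweight G y s')%R
  end.

Definition fplay (V : finType) (G : game V) (v : V) (s : seq V) : bool :=
  [&& path (edge G) v s, isT G (last v s) & all (fun x => ~~ isT G x) (belast v s)].

Definition reachP (R : realType) (V : finType) (G : game V)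
  (rho tau : V -> V -> R) (v : V) : \bar R :=
  \esum_(s in [set s | fplay G v s]) (pprob G rho tau v s)%:E.

(* E^{rho,tau}_v(TP): plays not reaching T have payoff +oo, so the
   expectation is +oo when P(◊T) < 1; otherwise it is the expectation over
   the (countably many) finite plays, split in positive and negative parts. *)
Definition ETP (R : realType) (V : finType) (G : game V)
  (rho tau : V -> V -> R) (v : V) : \bar R :=
  if (reachP G rho tau v < 1)%E then +oo%E
  else (\esum_(s in [set s | fplay G v s])
           (pprob G rho tau v s * Num.max ((pweight G v s)%:~R) 0)%:E
        - \esum_(s in [set s | fplay G v s])
           (pprob G rho tau v s * Num.max (- (pweight G v s)%:~R) 0)%:E)%E.

Definition Val_m (R : realType) (V : finType) (G : game V)
  (rho : V -> V -> R) (v : V) : \bar R :=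
  ereal_sup [set ETP G rho tau v | tau in [set tau | mstrat G (isMax G) tau]].

Definition Val_m_bar (R : realType) (V : finType) (G : game V) (v : V) : \bar R :=
  ereal_inf [set Val_m G rho v | rho in [set rho | mstrat G (isMin G) rho]].

Definition Etilde (R : realType) (V : finType) (G : game V)
  (rho : V -> V -> R) (v v' : V) : Prop :=
  rho v v' != 0 /\
  forall v'', rho v v'' != 0 ->
    (((weight G v v')%:~R)%:E + Val_m G rho v' <=
     ((weight G v v'')%:~R)%:E + Val_m G rho v'')%E.

Definition Gtilde_edge (R : realType) (V : finType) (G : game V)
  (rho : V -> V -> R) (u v : V) : Prop :=
  edge G u v /\ (isMin G u -> Etilde G rho u v).

Definition attr_eqs (R : realType) (V : finType) (G : game V)
  (rho : V -> V -> R) (d : V -> nat) : Prop :=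
  forall v,
    (isT G v -> d v = 0%N) /\
    (isMin G v -> (exists2 v', rho v v' != 0 & d v = (d v').+1) /\
                  (forall v', rho v v' != 0 -> (d v <= (d v').+1)%N)) /\
    (isMax G v -> (exists2 v', edge G v v' & d v = (d v').+1) /\
                  (forall v', edge G v v' -> ((d v').+1 <= d v)%N)).

Definition attr_dist (R : realType) (V : finType) (G : game V)
  (rho : V -> V -> R) (d : V -> nat) : Prop :=
  attr_eqs G rho d /\ forall d', attr_eqs G rho d' -> forall v, (d v <= d' v)%N.

Definition sigma1_spec (R : realType) (V : finType) (G : game V)
  (rho : V -> V -> R) (d : V -> nat) (sigma1 : V -> V) : Prop :=
  forall v, isMin G v ->
    Etilde G rho v (sigma1 v) /\
    forall v', Etilde G rho v v' -> (d (sigma1 v) <= d v')%N.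

(* a cycle v_0 v_1 ... v_{k-1} (closing with v_k = v_0), k >= 1, given as
   c = v0 :: s, all of whose edges are edges of \tilde G, and in which every
   Min vertex u is followed by sigma1(u) *)
Definition conf_cycle (R : realType) (V : finType) (G : game V)
  (rho : V -> V -> R) (sigma1 : V -> V) (v0 : V) (s : seq V) : Prop :=
  forall i, (i < size (v0 :: s))%N ->
    let u := nth v0 (v0 :: s) i in
    let u' := nth v0 (v0 :: s) (i.+1 %% size (v0 :: s)) in
    Gtilde_edge G rho u u' /\ (isMin G u -> u' = sigma1 u).

Definition cycle_weight (V : finType) (G : game V) (v0 : V) (s : seq V) : int :=
  \sum_(i < size (v0 :: s))
     weight G (nth v0 (v0 :: s) i) (nth v0 (v0 :: s) (i.+1 %% size (v0 :: s))).

Definition NC_strategy (R : realType) (V : finType) (G : game V)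
  (rho : V -> V -> R) (sigma1 : V -> V) : Prop :=
  forall v0 s, conf_cycle G rho sigma1 v0 s -> (cycle_weight G v0 s < 0)%R.

(* Main.v *)
Require Import Defs.
From HB Require Import structures.
From mathcomp Require Import all_boot all_order all_algebra.
From mathcomp Require Import boolp classical_sets reals constructive_ereal ereal esum.
From mathcomp Require Import cardinality fsbigop finmap.
From mathcomp Require Import ring lra.
Import Order.TTheory GRing.Theory Num.Theory.
Local Open Scope classical_set_scope.
Local Open Scope ring_scope.
Set Implicit Arguments. Unset Strict Implicit. Unset Printing Implicit Defensive.

Section EsumGen.
Variables (R : realType).
Local Open Scope ereal_scope.

Lemma esumZ (T : choiceType) (S : set T) (a : T -> \bar R) (r : R) :
  (0 <= r)%R -> (forall i, 0 <= a i) ->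
  \esum_(i in S) (r%:E * a i) = r%:E * \esum_(i in S) a i.
Proof.
move=> r0 a0; rewrite /esum -ereal_supZl//; last first.
  by apply/set0P; exists 0; exists set0; [exact: fsets_set0|rewrite fsbig_set0].
congr ereal_sup; apply/seteqP; split=> x /=.
  move=> [A [fA AS] <-]; exists (\sum_(x \in A) a x); first by exists A.
  by rewrite !fsbig_finite// ge0_sume_distrr.
move=> [y [A [fA AS] <-] <-]; exists A => //.
by rewrite !fsbig_finite// ge0_sume_distrr.
Qed.

Lemma esum_sub (T : choiceType) (A B : set T) (a : T -> \bar R) :
  A `<=` B -> (forall i, 0 <= a i) ->
  \esum_(i in A) a i <= \esum_(i in B) a i.
Proof.
move=> AB a0; apply: ge_ereal_sup => _ [X [fX XA] <-].
by apply: ereal_sup_ubound; exists X => //; split => // x /XA /AB.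
Qed.

Lemma esum_finT (V : finType) (a : V -> \bar R) :
  (forall i, 0 <= a i) -> \esum_(i in [set: V]) a i = \sum_(i : V) a i.
Proof.
move=> a0; rewrite esum_fset; last 2 first. exact: finite_finset. by [].
rewrite (fsbigTE [fset x | x in enum V]%fset); last first.
  by move=> i; rewrite !inE /= mem_enum.
apply: perm_big; apply: uniq_perm; rewrite ?fset_uniq ?index_enum_uniq// => x.
by rewrite mem_index_enum !inE /= mem_enum.
Qed.

Lemma esum_cons (V : finType) (S : set (seq V)) (g : seq V -> \bar R) :
  (forall s, 0 <= g s) -> ~ S [::] ->
  \esum_(s in S) g s =
  \sum_(v : V) \esum_(s in [set s | S (v :: s)]) g (v :: s).
Proof.
move=> g0 Snil.
rewrite -esum_finT; last by move=> v; apply: esum_ge0.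
rewrite esum_esum//.
rewrite -(esum_image _ (fun k : V * seq V => k.1 :: k.2)); last first.
  by move=> [a s] [b t] _ _ /= [-> ->].
congr esum; apply/seteqP; split => [s|s].
  case: s => [//|v s] Ss; by exists (v, s).
by move=> [[v t] [_ /= St] <-].
Qed.

Lemma esum_trunc (V : finType) (S : set (seq V)) (g : seq V -> \bar R) c :
  (forall s, 0 <= g s) ->
  (forall n, \esum_(s in S `&` [set s | (size s <= n)%N]) g s <= c) ->
  \esum_(s in S) g s <= c.
Proof.
move=> g0 H; apply: ge_ereal_sup => _ [X [fX XS] <-].
pose n := (\max_(s <- fset_set X) size s)%N.
apply: le_trans (H n); apply: ereal_sup_ubound; exists X => //; split => // s Xs.
split; first exact: XS.
rewrite /= /n; apply: (@leq_bigmax_seq _ _ _ (fun s => size s)) => //.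
by rewrite in_fset_set// mem_set.
Qed.

End EsumGen.

Section Game.
Variables (R : realType) (V : finType) (G : game V) (rho : V -> V -> R).
Hypothesis rho_ok : mstrat G (isMin G) rho.

Notation Q := (trans G rho).
Local Notation isT := Defs.isT.

Lemma nonT_cases x : ~~ isT G x -> isMin G x \/ isMax G x.
Proof. by rewrite /isMax => ->; case: (isMin G x); [left|right]. Qed.

Section Tau.
Variable tau : V -> V -> R.
Hypothesis tau_ok : mstrat G (isMax G) tau.

Lemma Q_T x y : isT G x -> Q tau x y = 0.
Proof.
move=> xT; rewrite /trans (negbTE (T_notMin xT)) /isMax xT /=.
by [].
Qed.

Lemma Q_ge0 x y : 0 <= Q tau x y.
Proof.
rewrite /trans; case: ifP => [xM|_]; first by case: (rho_ok xM).
by case: ifP => // xM; case: (tau_ok xM).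
Qed.

Lemma Q_edge x y : Q tau x y != 0 -> edge G x y.
Proof.
rewrite /trans; case: ifP => [xM|_]; first by case: (rho_ok xM) => _ H _; apply: H.
by case: ifP => [xM|]; [case: (tau_ok xM) => _ H _; apply: H|rewrite eqxx].
Qed.

Lemma Q_sum x : ~~ isT G x -> \sum_y Q tau x y = 1.
Proof.
move=> xT; case xM: (isMin G x).
  transitivity (\sum_y rho x y); first by apply: eq_bigr => y _; rewrite /trans xM.
  by case: (rho_ok xM).
have xMax : isMax G x by rewrite /isMax xT xM.
transitivity (\sum_y tau x y); first by apply: eq_bigr => y _; rewrite /trans xM xMax.
by case: (tau_ok xMax).
Qed.

Lemma pprob_ge0 x s : 0 <= pprob G rho tau x s.
Proof.
elim: s x => [|y s IH] x /=; first exact: ler01.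
by apply: mulr_ge0; [apply: Q_ge0|apply: IH].
Qed.

Lemma fplay_nil x : fplay G x [::] = isT G x.
Proof. by rewrite /fplay /= andbT. Qed.

Lemma fplay_cons x y s : fplay G x (y :: s) = [&& ~~ isT G x, edge G x y & fplay G y s].
Proof.
rewrite /fplay /=.
by case: (isT G x); case: (edge G x y); rewrite /= ?andbF.
Qed.

Lemma fplay_nonT x y s : fplay G x (y :: s) -> ~~ isT G x.
Proof. by rewrite fplay_cons => /andP[]. Qed.

Hypothesis reach1 : forall v, reachP G rho tau v = 1%E.

Lemma reach_pos v : exists s, fplay G v s /\ pprob G rho tau v s != 0.
Proof.
apply: contrapT => H.
have := reach1 v; rewrite /reachP esum1 => [/esym/eqP|s /= Fs].
  by move=> /eqP [] /eqP; rewrite oner_eq0.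
apply/eqP; rewrite eqe; apply: contrapT => ps; apply: H; exists s; split => //.
exact/negP.
Qed.

Lemma maxP (delta : V -> R) :
  (forall x, isT G x -> delta x <= 0) ->
  (forall x, ~~ isT G x -> delta x <= \sum_y Q tau x y * delta y) ->
  forall x, delta x <= 0.
Proof.
move=> dT dN x.
have [m Hm] : exists m, forall y, delta y <= delta m.
  case: (@arg_maxP _ _ V x xpredT delta erefl) => m _ H.
  by exists m => y; apply: H.
apply: le_trans (Hm x) _; rewrite leNgt; apply/negP => M0.
have key : forall s z, delta z = delta m -> fplay G z s ->
                       pprob G rho tau z s != 0 -> False.
  elim=> [|y s IH] z dz.
    by rewrite fplay_nil => /dT; rewrite dz leNgt M0.
  move=> Fz /=; rewrite mulf_eq0 negb_or => /andP[Qzy ps].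
  have zT := fplay_nonT Fz.
  move: Fz; rewrite fplay_cons => /and3P[_ _ Fy].
  apply: (IH y) => //; apply/eqP; rewrite eq_le Hm /=; apply/negP => lt.
  have := dN z zT; rewrite dz; apply/negP; rewrite -ltNge.
  rewrite -subr_gt0.
  have -> : delta m = \sum_y0 Q tau z y0 * delta m by rewrite -mulr_suml Q_sum // mul1r.
  rewrite -sumrB (bigD1 y) //=.
  apply: ltr_pwDl.
    rewrite -mulrBr mulr_gt0 //; first by rewrite lt0r Qzy Q_ge0.
    by rewrite subr_gt0 ltNge; apply/negP.
  apply: sumr_ge0 => i _; rewrite -mulrBr mulr_ge0 ?Q_ge0 // subr_ge0 //.
have [s [Fs ps]] := reach_pos m.
exact: (key s m erefl Fs ps).
Qed.

End Tau.
End Game.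

Section LA.
Variables (R : fieldType) (V : finType) (M : V -> V -> R).

Let n := #|V|.
Let A : 'M[R]_n := \matrix_(i, j) ((i == j)%:R - M (enum_val j) (enum_val i)).

Let hu (u : 'rV[R]_n) (x : V) := u 0 (enum_rank x).

Let entry (u : 'rV[R]_n) x :
  (u *m A) 0 (enum_rank x) = hu u x - \sum_y M x y * hu u y.
Proof.
rewrite mxE.
under eq_bigr do rewrite mxE mulrBr.
rewrite sumrB (bigD1 (enum_rank x)) //= eqxx mulr1 big1 ?addr0; last first.
  by move=> i /negbTE; rewrite eq_sym => ->; rewrite mulr0.
congr (_ - _); rewrite (reindex (@enum_rank V)) /=; last first.
  by exists enum_val => i _; rewrite ?enum_rankK ?enum_valK.
by apply: eq_bigr => y _; rewrite !enum_rankK mulrC.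
Qed.

Lemma LA_solve :
  (forall h : V -> R, (forall x, h x = \sum_y M x y * h y) -> forall x, h x = 0) ->
  forall b : V -> R, exists h : V -> R, forall x, h x = b x + \sum_y M x y * h y.
Proof.
move=> inj b.
have Aunit : A \in unitmx.
  rewrite -row_free_unit -kermx_eq0; apply/eqP/row_matrixP => k.
  rewrite linear0; set u := row k (kermx A).
  have uA : u *m A = 0 by rewrite /u -row_mul mulmx_ker linear0.
  have hu0 : forall x, hu u x = 0.
    apply: inj => x; apply/eqP; rewrite -subr_eq0 -entry uA mxE //.
  apply/rowP => i; rewrite mxE; have := hu0 (enum_val i).
  by rewrite /hu enum_valK /u mxE => ->; rewrite mxE.
pose bu : 'rV[R]_n := \row_i b (enum_val i).
pose u0 := bu *m invmx A.
exists (hu u0) => x.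
have := entry u0 x; rewrite /u0 mulmxKV // mxE enum_rankK => ->.
by rewrite subrK.
Qed.

End LA.

Section Eval.
Variables (R : realType) (V : finType) (G : game V) (rho : V -> V -> R).
Hypothesis rho_ok : mstrat G (isMin G) rho.
Variable tau : V -> V -> R.
Hypothesis tau_ok : mstrat G (isMax G) tau.
Hypothesis reach1 : forall v, reachP G rho tau v = 1%E.

Local Notation isT := Defs.isT.
Local Notation Q := (trans G rho tau).
Local Notation p := (pprob G rho tau).
Local Notation F v := [set s | fplay G v s].

Let Qge0 := Q_ge0 rho_ok tau_ok.
Let pge0 := pprob_ge0 rho_ok tau_ok.

Lemma Q_eq0 x y : ~~ edge G x y -> Q x y = 0.
Proof.
move=> E; have [//|H] := eqVneq (Q x y) 0.
by rewrite (Q_edge rho_ok tau_ok H) in E.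
Qed.

Lemma FS v (h : seq V -> R) : ~~ isT G v -> (forall s, 0 <= h s) ->
  \esum_(s in F v) (p v s * h s)%:E =
  (\sum_y (Q v y)%:E * \esum_(s in F y) (p y s * h (y :: s))%:E)%E.
Proof.
move=> vT h0.
rewrite (@esum_cons _ _ (F v) (fun s => (p v s * h s)%:E)); last first.
- by rewrite /= fplay_nil; apply/negP.
- by move=> s; rewrite lee_fin mulr_ge0.
apply: eq_bigr => y _.
case E: (edge G v y).
  have -> : [set s | F v (y :: s)] = F y.
    by apply/seteqP; split => s /=; rewrite fplay_cons vT E.
  rewrite -esumZ //; last by move=> s; rewrite lee_fin mulr_ge0.
  by apply: eq_esum => s _ /=; rewrite -EFinM mulrA.
rewrite Q_eq0 ?E // mul0e esum1 // => s /=.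
by rewrite fplay_cons E andbF.
Qed.

Lemma F_T v s : isT G v -> F v s -> s = [::].
Proof.
move: s => [//|y s] vT /= H.
by have := fplay_nonT H; rewrite vT.
Qed.

Lemma Q_inj (h : V -> R) : (forall x, h x = \sum_y Q x y * h y) -> forall x, h x = 0.
Proof.
have hmax : forall h : V -> R, (forall x, h x = \sum_y Q x y * h y) -> forall x, h x <= 0.
  move=> h' Hh; apply: (maxP rho_ok tau_ok reach1).
    move=> x xT; rewrite Hh big1 // => y _; by rewrite Q_T // mul0r.
  by move=> x _; rewrite -Hh.
move=> Hh x; apply/eqP; rewrite eq_le hmax //= -oppr_le0.
have := hmax (fun x => - h x); apply => y; rewrite Hh -sumrN.
by apply: eq_bigr => z _; rewrite mulrN.
Qed.

Lemma solve_ex (b : V -> R) : exists h : V -> R,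
  forall x, h x = b x + \sum_y Q x y * h y.
Proof. exact: (LA_solve Q_inj). Qed.

Lemma phi_ex : exists phi : V -> R, (forall x, 0 <= phi x) /\
  (forall x, ~~ isT G x -> phi x = 1 + \sum_y Q x y * phi y).
Proof.
have [phi Hphi] := solve_ex (fun x => if isT G x then 0 else 1).
exists phi; split; last by move=> x xT; rewrite Hphi (negbTE xT).
move=> x; rewrite -oppr_le0; move: x; apply: (maxP rho_ok tau_ok reach1).
  move=> x xT; rewrite Hphi xT add0r big1 ?oppr0 // => y _; by rewrite Q_T // mul0r.
move=> x xT; rewrite Hphi (negbTE xT) opprD -sumrN.
under eq_bigr do rewrite -mulrN.
lra.
Qed.

Lemma reach_le1 v (A : set (seq V)) : A `<=` F v ->
  (\esum_(s in A) (p v s)%:E <= 1)%E.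
Proof.
move=> AF; rewrite -(reach1 v) /reachP; apply: esum_sub => // s.
by rewrite lee_fin.
Qed.

Lemma len_trunc (phi : V -> R) : (forall x, 0 <= phi x) ->
  (forall x, ~~ isT G x -> phi x = 1 + \sum_y Q x y * phi y) ->
  forall n v, (\esum_(s in F v `&` [set s | (size s <= n)%N])
                 (p v s * (size s)%:R)%:E <= (phi v)%:E)%E.
Proof.
move=> phi0 Hphi; elim=> [|n IH] v.
  rewrite esum1 ?lee_fin // => s [_ /=]; rewrite leqn0 => /nilP ->.
  by rewrite mulr0.
have [vT|vT] := boolP (isT G v).
  rewrite esum1 ?lee_fin // => s [/= Fs _]; rewrite (F_T vT Fs) /=.
  by rewrite mulr0.
rewrite (@esum_cons _ _ _ (fun s => (p v s * (size s)%:R)%:E)); last first.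
- by case; rewrite /= fplay_nil (negbTE vT).
- by move=> s; rewrite lee_fin mulr_ge0.
have -> : (phi v = \sum_y (Q v y * (1 + phi y)))%R.
  under eq_bigr do rewrite mulrDr mulr1.
  by rewrite big_split /= (Q_sum rho_ok tau_ok vT) Hphi.
rewrite -sumEFin; apply: lee_sum => y _.
apply: (@le_trans _ _ (\esum_(s in F y `&` [set s | (size s <= n)%N])
                      (p v (y :: s) * (size (y :: s))%:R)%:E)).
  apply: esum_sub => [s [/= Fs Ss]|s]; last by rewrite lee_fin mulr_ge0.
  split => //=; move: Fs; rewrite fplay_cons => /and3P[].
  by [].
rewrite (eq_esum (b := fun s => ((Q v y)%:E * ((p y s)%:E + (p y s * (size s)%:R)%:E))%E)); last first.
  move=> s _ /=; rewrite -EFinD -EFinM; congr EFin; rewrite -addn1 natrD; ring.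
rewrite esumZ //; last by move=> s; rewrite -EFinD lee_fin addr_ge0 ?mulr_ge0.
rewrite EFinM.
apply: lee_wpmul2l; first by rewrite lee_fin.
rewrite esumD; [|by move=> s _; rewrite lee_fin|by move=> s _; rewrite lee_fin mulr_ge0].
rewrite EFinD leeD //; first by apply: reach_le1 => s [].
Qed.

Lemma len_bound (phi : V -> R) : (forall x, 0 <= phi x) ->
  (forall x, ~~ isT G x -> phi x = 1 + \sum_y Q x y * phi y) ->
  forall v, (\esum_(s in F v) (p v s * (size s)%:R)%:E <= (phi v)%:E)%E.
Proof.
move=> phi0 Hphi v; apply: esum_trunc => [s|n]; first by rewrite lee_fin mulr_ge0.
exact: len_trunc.
Qed.

Definition W : R := \sum_x \sum_y `|(weight G x y)%:~R : R|.

Lemma W_ge0 : 0 <= W.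
Proof. by apply: sumr_ge0 => x _; apply: sumr_ge0. Qed.

Lemma w_le_W x y : `|(weight G x y)%:~R : R| <= W.
Proof.
rewrite /W (bigD1 x) //= (bigD1 y) //= -addrA lerDl.
apply: addr_ge0; first by apply: sumr_ge0.
by apply: sumr_ge0 => z _; apply: sumr_ge0.
Qed.

Lemma pw_bound v s : `|(pweight G v s)%:~R : R| <= W * (size s)%:R.
Proof.
elim: s v => [|y s IH] v /=; first by rewrite normr0 mulr0.
rewrite intrD -addn1 natrD mulrDr mulr1 addrC.
apply: le_trans (ler_normD _ _) _; apply: lerD; [exact: IH|exact: w_le_W].
Qed.

Definition ee y (h : seq V -> R) := \esum_(s in F y) (p y s * h s)%:E.

Lemma ee_ge0 y h : (forall s, 0 <= h s) -> (0 <= ee y h)%E.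
Proof. by move=> h0; apply: esum_ge0 => s _; rewrite lee_fin mulr_ge0. Qed.

Lemma ee_fin y h K : 0 <= K -> (forall s, 0 <= h s <= K + W * (size s)%:R) ->
  ee y h \is a fin_num.
Proof.
move=> K0 hb; rewrite ge0_fin_numE; last by apply: ee_ge0 => s; case/andP: (hb s).
have [phi [phi0 Hphi]] := phi_ex.
apply: (@le_lt_trans _ _ (K%:E + W%:E * (phi y)%:E)%E); last by rewrite -EFinM -EFinD ltry.
apply: (@le_trans _ _ (\esum_(s in F y) ((K%:E * (p y s)%:E) + W%:E * (p y s * (size s)%:R)%:E))%E).
  apply: le_esum => s _; rewrite -!EFinM -EFinD lee_fin.
  case/andP: (hb s) => _ hs.
  have -> : K * p y s + W * (p y s * (size s)%:R) = p y s * (K + W * (size s)%:R) by ring.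
  by apply: ler_wpM2l.
rewrite esumD; [|by move=> s _; rewrite -EFinM lee_fin mulr_ge0|by move=> s _; rewrite -EFinM lee_fin; apply: mulr_ge0; [exact: W_ge0|exact: mulr_ge0]].
rewrite !esumZ //; [|by move=> s; rewrite lee_fin|exact: W_ge0|by move=> s; rewrite lee_fin mulr_ge0].
apply: leeD.
  rewrite -[X in (_ <= X)%E]mule1; apply: lee_wpmul2l; first by rewrite lee_fin.
  by apply: reach_le1.
apply: lee_wpmul2l; first by rewrite lee_fin W_ge0.
by apply: len_bound.
Qed.

Lemma ee_lin3 y h1 h2 c : (forall s, 0 <= h1 s) -> (forall s, 0 <= h2 s) -> 0 <= c ->
  ee y (fun s => h1 s + h2 s + c) = (ee y h1 + ee y h2 + c%:E)%E.
Proof.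
move=> h10 h20 c0; rewrite /ee.
rewrite (eq_esum (b := fun s => ((p y s * h1 s)%:E + (p y s * h2 s)%:E + c%:E * (p y s)%:E)%E)); last first.
  by move=> s _; rewrite -!EFinM -!EFinD; congr EFin; ring.
rewrite esumD; [|by move=> s _; rewrite -EFinD lee_fin addr_ge0 ?mulr_ge0|by move=> s _; rewrite -EFinM lee_fin mulr_ge0].
rewrite esumD; [|by move=> s _; rewrite lee_fin mulr_ge0|by move=> s _; rewrite lee_fin mulr_ge0].
rewrite esumZ //; last by move=> s; rewrite lee_fin.
by have := reach1 y; rewrite /reachP => ->; rewrite mule1.
Qed.

Definition Pp v s : R := Num.max ((pweight G v s)%:~R) 0.
Definition Nn v s : R := Num.max (- (pweight G v s)%:~R) 0.

Lemma Pp_bound v s : 0 <= Pp v s <= 0 + W * (size s)%:R.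
Proof.
rewrite /Pp le_max lexx orbT /= add0r; apply: le_trans (pw_bound v s).
by rewrite ge_max normr_ge0 ler_norm.
Qed.

Lemma Nn_bound v s : 0 <= Nn v s <= 0 + W * (size s)%:R.
Proof.
rewrite /Nn le_max lexx orbT /= add0r; apply: le_trans (pw_bound v s).
by rewrite ge_max normr_ge0 -normrN ler_norm.
Qed.

Lemma Pp_cons_bound v y s : 0 <= Pp v (y :: s) <= W + W * (size s)%:R.
Proof.
case/andP: (Pp_bound v (y :: s)) => -> /= H; apply: le_trans H _.
by rewrite add0r /= -addn1 natrD mulrDr mulr1 addrC.
Qed.

Lemma Nn_cons_bound v y s : 0 <= Nn v (y :: s) <= W + W * (size s)%:R.
Proof.
case/andP: (Nn_bound v (y :: s)) => -> /= H; apply: le_trans H _.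
by rewrite add0r /= -addn1 natrD mulrDr mulr1 addrC.
Qed.

Definition aval v : R := fine (ee v (Pp v)) - fine (ee v (Nn v)).

Lemma ETP_aval v : ETP G rho tau v = (aval v)%:E.
Proof.
rewrite /ETP reach1 ltxx /aval EFinB.
rewrite !fineK //; [exact: (@ee_fin v (Nn v) 0 (lexx _) (Nn_bound v))|exact: (@ee_fin v (Pp v) 0 (lexx _) (Pp_bound v))].
Qed.

Lemma aval_T v : isT G v -> aval v = 0.
Proof.
move=> vT; rewrite /aval /ee !esum1 ?subrr // => s /= Fs; rewrite (F_T vT Fs).
  by rewrite /Nn /= oppr0 maxxx mulr0.
by rewrite /Pp /= maxxx mulr0.
Qed.

Lemma maxdiff (a : R) : Num.max a 0 - Num.max (- a) 0 = a.
Proof.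
case: (leP 0 a) => h.
  by rewrite (max_r _) ?subr0 // oppr_le0.
by rewrite (max_l _) ?sub0r ?opprK // oppr_ge0 ltW.
Qed.

Lemma max0_ge0 (a : R) : 0 <= Num.max a 0.
Proof. by rewrite le_max lexx orbT. Qed.

Lemma FS_fine v (h : seq V -> R) K : ~~ isT G v -> 0 <= K ->
  (forall s, 0 <= h s) ->
  (forall y s, h (y :: s) <= K + W * (size s)%:R) ->
  fine (ee v h) = \sum_y Q v y * fine (ee y (fun s => h (y :: s))).
Proof.
move=> vT K0 h0 hb; rewrite /ee FS //.
have fin y : ee y (fun s => h (y :: s)) \is a fin_num.
  by apply: (@ee_fin y (fun s => h (y :: s)) K K0) => s; rewrite h0 hb.
transitivity (fine (\sum_y ((Q v y * fine (ee y (fun s => h (y :: s))))%:E))%E).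
  congr fine; apply: eq_bigr => y _; rewrite EFinM fineK //; exact: fin.
by rewrite sumEFin.
Qed.

Lemma aval_eq v : ~~ isT G v ->
  aval v = \sum_y Q v y * ((weight G v y)%:~R + aval y).
Proof.
move=> vT; rewrite /aval.
have hP1 : forall s, 0 <= Pp v s by move=> s; case/andP: (Pp_bound v s).
have hP2 : forall y s, Pp v (y :: s) <= W + W * (size s)%:R.
  by move=> y s; case/andP: (Pp_cons_bound v y s).
have hN1 : forall s, 0 <= Nn v s by move=> s; case/andP: (Nn_bound v s).
have hN2 : forall y s, Nn v (y :: s) <= W + W * (size s)%:R.
  by move=> y s; case/andP: (Nn_cons_bound v y s).
rewrite (FS_fine vT W_ge0 hP1 hP2) (FS_fine vT W_ge0 hN1 hN2).
rewrite -sumrB; apply: eq_bigr => y _; rewrite -mulrBr; congr (_ * _).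
set c : R := (weight G v y)%:~R.
have finA : ee y (fun s => Pp v (y :: s)) \is a fin_num.
  by apply: (@ee_fin y (fun s => Pp v (y :: s)) W W_ge0) => s; apply: Pp_cons_bound.
have finB : ee y (fun s => Nn v (y :: s)) \is a fin_num.
  by apply: (@ee_fin y (fun s => Nn v (y :: s)) W W_ge0) => s; apply: Nn_cons_bound.
have finP : ee y (Pp y) \is a fin_num.
  by apply: (@ee_fin y (Pp y) 0 (lexx 0)) => s; apply: Pp_bound.
have finN : ee y (Nn y) \is a fin_num.
  by apply: (@ee_fin y (Nn y) 0 (lexx 0)) => s; apply: Nn_bound.
have key : ee y (fun s => Pp v (y :: s) + Nn y s + Num.max (- c) 0) =
           ee y (fun s => Nn v (y :: s) + Pp y s + Num.max c 0).
  rewrite /ee; apply: eq_esum => s _; congr (EFin (_ * _)).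
  have e1 := maxdiff ((pweight G v (y :: s))%:~R).
  have e2 := maxdiff ((pweight G y s)%:~R).
  have e3 := maxdiff c.
  move: e1 e2 e3; rewrite /Pp /Nn /= intrD -/c.
  lra.
rewrite !ee_lin3 in key; try by move=> s; rewrite ?max0_ge0.
move: key; rewrite -(fineK finA) -(fineK finB) -(fineK finP) -(fineK finN).
rewrite -!EFinD => -[key].
have e3 := maxdiff c.
lra.
  exact: max0_ge0.
exact: max0_ge0.
Qed.

End Eval.

Section Opt.
Variables (R : realType) (V : finType) (G : game V) (rho : V -> V -> R).
Hypothesis rho_ok : mstrat G (isMin G) rho.
Hypothesis reachAll : forall v tau, mstrat G (isMax G) tau -> reachP G rho tau v = 1%E.

Local Notation isT := Defs.isT.
Local Notation w x y := ((weight G x y)%:~R : R).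

Lemma le_of_eq (x y : R) : x = y -> x <= y. Proof. by move->. Qed.

Section Cmp.
Variable tau : V -> V -> R.
Hypothesis tau_ok : mstrat G (isMax G) tau.
Let r1 : forall v, reachP G rho tau v = 1%E := fun v => reachAll v tau_ok.
Local Notation Q := (trans G rho tau).
Local Notation a := (aval G rho tau).

Lemma cmp_le (h : V -> R) : (forall x, isT G x -> h x = 0) ->
  (forall x, ~~ isT G x -> h x <= \sum_y Q x y * (w x y + h y)) ->
  forall x, h x <= a x.
Proof.
move=> hT hN x; rewrite -subr_le0; move: x.
apply: (maxP rho_ok tau_ok r1) => x xT.
  by rewrite hT // aval_T // subr0.
rewrite (aval_eq rho_ok tau_ok r1 xT).
apply: le_trans (lerB (hN x xT) (lexx _)) _.
rewrite -sumrB; apply: le_of_eq; apply: eq_bigr => y _; ring.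
Qed.

Lemma cmp_ge (h : V -> R) : (forall x, isT G x -> h x = 0) ->
  (forall x, ~~ isT G x -> \sum_y Q x y * (w x y + h y) <= h x) ->
  forall x, a x <= h x.
Proof.
move=> hT hN x; rewrite -subr_le0; move: x.
apply: (maxP rho_ok tau_ok r1) => x xT.
  by rewrite hT // aval_T // subr0.
rewrite {1}(aval_eq rho_ok tau_ok r1 xT).
apply: le_trans (lerB (lexx _) (hN x xT)) _.
rewrite -sumrB; apply: le_of_eq; apply: eq_bigr => y _; ring.
Qed.

End Cmp.

Definition tf (f : {ffun V -> V}) (u v : V) : R := (f u == v)%:R.
Definition Dok (f : {ffun V -> V}) := [forall u, isMax G u ==> edge G u (f u)].

Lemma sum_tf (f : {ffun V -> V}) u (F : V -> R) :
  \sum_y tf f u y * F y = F (f u).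
Proof.
rewrite (bigD1 (f u)) //= /tf eqxx mul1r big1 ?addr0 // => y /negbTE.
by rewrite eq_sym => ->; rewrite mul0r.
Qed.

Lemma tf_ok f : Dok f -> mstrat G (isMax G) (tf f).
Proof.
move=> /forallP Hf u uM; split.
- by move=> v; rewrite /tf ler0n.
- move=> v; rewrite /tf; have [<- _|ne] := eqVneq (f u) v.
    by have := Hf u; rewrite uM.
  by rewrite eqxx.
- by have := sum_tf f u (fun _ => 1); under eq_bigr do rewrite mulr1.
Qed.

Lemma Dok_ex : exists f, Dok f.
Proof.
exists [ffun u => odflt u [pick v | edge G u v]]; apply/forallP => u.
apply/implyP => /andP[uT _]; rewrite ffunE.
case: pickP => [v //|H]; have [v Hv] := succ_ex uT.
by rewrite H in Hv.
Qed.

Lemma trans_Min tau x y : isMin G x -> trans G rho tau x y = rho x y.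
Proof. by rewrite /trans => ->. Qed.

Lemma trans_Max tau x y : isMax G x -> trans G rho tau x y = tau x y.
Proof. by move=> H; rewrite /trans H; case/andP: H => _ /negbTE ->. Qed.

Definition S (f : {ffun V -> V}) := \sum_v aval G rho (tf f) v.

Lemma opt_exists : exists g : V -> R,
  [/\ forall v, Val_m G rho v = (g v)%:E,
      forall u u', isMax G u -> edge G u u' -> w u u' + g u' <= g u
    & forall u, isMin G u -> g u = \sum_y rho u y * (w u y + g y)].
Proof.
have [f0 Df0] := Dok_ex.
case: (@arg_maxP _ _ _ f0 Dok S Df0) => fs Dfs fmax.
set g := aval G rho (tf fs).
have fs_ok := tf_ok Dfs.
have G1 : forall u u', isMax G u -> edge G u u' -> w u u' + g u' <= g u.
  move=> u u' uM uu'; rewrite leNgt; apply/negP => lt.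
  pose f' := [ffun x => if x == u then u' else fs x].
  have Df' : Dok f'.
    apply/forallP => x; rewrite ffunE; case: eqP => [->|_]; first by rewrite uM.
    by have := forallP Dfs x.
  have f'_ok := tf_ok Df'.
  set a' := aval G rho (tf f').
  have ga : forall x, g x <= a' x.
    apply: (cmp_le f'_ok) => [x xT|x xT]; first by rewrite /g aval_T.
    case: (nonT_cases xT) => xM.
      rewrite /g {1}(aval_eq rho_ok fs_ok (fun v => reachAll v fs_ok) xT).
      by apply: le_of_eq; apply: eq_bigr => y _; rewrite !trans_Min.
    under [X in _ <= X]eq_bigr do rewrite trans_Max //.
    rewrite sum_tf ffunE; case: eqP => [->|_]; first exact: ltW.
    rewrite /g {1}(aval_eq rho_ok fs_ok (fun v => reachAll v fs_ok) xT).
    by under eq_bigr do rewrite trans_Max //; rewrite sum_tf.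
  have ua : g u < a' u.
    apply: lt_le_trans lt _.
    rewrite /a' (aval_eq rho_ok f'_ok (fun v => reachAll v f'_ok) (negbT _)); last first.
      by case/andP: uM => /negbTE.
    under eq_bigr do rewrite trans_Max //.
    by rewrite sum_tf ffunE eqxx lerD2l ga.
  have := fmax f' Df'; rewrite /= leNgt => /negP; apply.
  rewrite /S -subr_gt0 -sumrB (bigD1 u) //= ltr_pwDl //; first by rewrite subr_gt0.
  by apply: sumr_ge0 => x _; rewrite subr_ge0 ga.
have G2 : forall tau, mstrat G (isMax G) tau -> forall x, aval G rho tau x <= g x.
  move=> tau tau_ok; apply: (cmp_ge tau_ok) => [x xT|x xT]; first by rewrite /g aval_T.
  case: (nonT_cases xT) => xM.
    rewrite /g (aval_eq rho_ok fs_ok (fun v => reachAll v fs_ok) xT).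
    by apply: le_of_eq; apply: eq_bigr => y _; rewrite !trans_Min.
  under eq_bigr do rewrite trans_Max //.
  apply: (@le_trans _ _ (\sum_y tau x y * g x)).
    apply: ler_sum => y _; have [->|nz] := eqVneq (tau x y) 0; first by rewrite !mul0r.
    case: (tau_ok x xM) => t0 te _.
    by apply: ler_wpM2l => //; apply: G1 => //; apply: te.
  by rewrite -mulr_suml; case: (tau_ok x xM) => _ _ ->; rewrite mul1r.
exists g; split => //.
- move=> v; apply/eqP; rewrite eq_le; apply/andP; split.
    apply: ge_ereal_sup => _ [tau tau_ok <-].
    by rewrite (ETP_aval rho_ok tau_ok (fun v => reachAll v tau_ok)) lee_fin G2.
  apply: ereal_sup_ubound; exists (tf fs) => //.
  by rewrite (ETP_aval rho_ok fs_ok (fun v => reachAll v fs_ok)).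
- move=> u uM; rewrite /g {1}(aval_eq rho_ok fs_ok (fun v => reachAll v fs_ok)).
    by apply: eq_bigr => y _; rewrite trans_Min.
  by apply/negP => uT; rewrite (negbTE (T_notMin uT)) in uM.
Qed.

End Opt.

Local Notation isT := Defs.isT.

Lemma big_rot (T : Type) (idx : T) (op : Monoid.com_law idx) n (F : nat -> T) :
  (0 < n)%N -> \big[op/idx]_(i < n) F ((i.+1) %% n)%N = \big[op/idx]_(i < n) F i.
Proof.
case: n => [//|m] _; rewrite big_ord_recr big_ord_recl /= modnn.
rewrite Monoid.mulmC; congr (op _ _); apply: eq_bigr => i _.
by rewrite modn_small // ltnS.
Qed.

Unset Implicit Arguments.

Theorem lemma22 (R : realType) (V : finType) (G : game V)
  (rho : V -> V -> R) (d : V -> nat) (sigma1 : V -> V) :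
  (forall v, Val_d R G v != +oo%E) ->
  (forall v, Val_m_bar R G v != +oo%E) ->
  mstrat G (isMin G) rho ->
  (forall v tau, mstrat G (isMax G) tau -> reachP G rho tau v = 1%E) ->
  attr_dist G rho d ->
  sigma1_spec G rho d sigma1 ->
  NC_strategy G rho sigma1.
Proof.
move=> _ _ rho_ok reachAll [dEq _] s1 v0 s Hc.
have [g [Hval G1 G3]] := opt_exists rho_ok reachAll.
set c := v0 :: s.
set n := size c.
have n0 : (0 < n)%N by [].
pose u i := nth v0 c i.
pose nx i := (i.+1 %% n)%N.
pose wr x y : R := (weight G x y)%:~R.
pose slack i := g (u i) - g (u (nx i)) - wr (u i) (u (nx i)).
have Et : forall a b, Etilde G rho a b <-> rho a b != 0 /\
   forall y, rho a y != 0 -> wr a b + g b <= wr a y + g y.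
  move=> a b; rewrite /Etilde; split => -[H1 H2]; split => // y Hy.
    by have := H2 y Hy; rewrite !Hval -!EFinD lee_fin.
  by rewrite !Hval -!EFinD lee_fin; apply: H2.
have step : forall i, (i < n)%N -> 0 <= slack i /\ (slack i = 0 -> (d (u (nx i)) < d (u i))%N).
  move=> i ilt; have [[Eab Hmin] Hs] := Hc i ilt.
  rewrite -/c -/n in Eab Hmin Hs.
  rewrite /slack.
  set a := nth v0 c i in Eab Hmin Hs *.
  set b := nth v0 c (i.+1 %% n) in Eab Hmin Hs *.
  rewrite /u /nx -/a -/b.
  have aT : ~~ isT G a := edge_src Eab.
  case: (nonT_cases aT) => aM.
    have bs : b = sigma1 a by apply: Hs.
    have [Hb Hbmin] := (Et a b).1 (Hmin aM).
    have Hg := G3 a aM.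
    have ge : wr a b + g b <= g a.
      rewrite Hg; apply: (@le_trans _ _ (\sum_y rho a y * (wr a b + g b))).
        by rewrite -mulr_suml; case: (rho_ok a aM) => _ _ ->; rewrite mul1r.
      apply: ler_sum => y _; have [->|nz] := eqVneq (rho a y) 0; first by rewrite !mul0r.
      apply: ler_wpM2l; first by case: (rho_ok a aM).
      exact: Hbmin.
    split; first by lra.
    move=> sl0.
    have eqm : g a = wr a b + g b by apply/eqP; rewrite -subr_eq0 -sl0; apply/eqP; ring.
    have allE : forall y, rho a y != 0 -> Etilde G rho a y.
      move=> y ny; apply/(Et a y); split => // y' ny'.
      suff -> : wr a y + g y = wr a b + g b by apply: Hbmin.
      have : \sum_y0 rho a y0 * ((wr a y0 + g y0) - (wr a b + g b)) = 0.
        under eq_bigr do rewrite mulrBr.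
        rewrite sumrB -mulr_suml -Hg; case: (rho_ok a aM) => _ _ ->.
        by rewrite mul1r eqm subrr.
      have nn : forall z, true -> 0 <= rho a z * ((wr a z + g z) - (wr a b + g b)).
        move=> z _; have [->|nz] := eqVneq (rho a z) 0; first by rewrite mul0r.
        apply: mulr_ge0; first by case: (rho_ok a aM).
        by rewrite subr_ge0; apply: Hbmin.
      move/(psumr_eq0P nn) => H; apply/eqP; rewrite -subr_eq0.
      by have := H y (erefl true); move/eqP; rewrite mulf_eq0 (negbTE ny).
    have [[v' nv' dv'] _] := (dEq a).2.1 aM.
    rewrite bs dv' ltnS.
    by apply: (s1 a aM).2; apply: allE.
  have aN : ~~ isMin G a by case/andP: aM.
  split; first by have := G1 a b aM Eab; rewrite /wr; lra.
  move=> _; have [_ H] := (dEq a).2.2 aM.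
  exact: H.
rewrite ltNge; apply/negP => cw0.
have cwR : 0 <= \sum_(i < n) wr (u i) (u (nx i)).
  have : (0 <= (cycle_weight G v0 s)%:~R :> R) by rewrite ler0z.
  by rewrite /cycle_weight rmorph_sum.
have rot : \sum_(i < n) g (u (nx i)) = \sum_(i < n) g (u i).
  exact: (@big_rot _ 0 +%R n (fun j => g (u j)) n0).
have sum_slack : \sum_(i < n) slack i = - \sum_(i < n) wr (u i) (u (nx i)).
  by rewrite /slack !sumrB rot subrr sub0r.
have nn : forall i : 'I_n, true -> 0 <= slack i by move=> i _; case: (step i (ltn_ord i)).
have all0 := psumr_eq0P nn.
have dlt : forall i : 'I_n, true -> ((d (u (nx i))).+1 <= d (u i))%N.
  move=> i _; case: (step i (ltn_ord i)) => _; apply; apply: all0 => //.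
  by apply/eqP; rewrite eq_le sumr_ge0 // sum_slack oppr_le0 cwR.
have : (\sum_(i < n) (d (u (nx i))).+1 <= \sum_(i < n) d (u i))%N.
  by apply: leq_sum.
under eq_bigr do rewrite -addn1.
rewrite big_split /= (@big_rot _ 0%N addn n (fun j => d (u j)) n0) sum1_card card_ord.
move=> H; suff : (n <= 0)%N by rewrite leqNgt n0.
by rewrite -(leq_add2l (\sum_(i < n) d (u i))) addn0.
Qed.
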